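(* Let $q$ be a prime power and $m$ a prime number. Then there is a loop $L$ of order $q^{m^2}-1$ whose center is $\mathbb{F}_q^\times\cdot 1$, whose left, middle and right nuclei are all $\mathbb{F}_{q^m}^\times\cdot 1$, and whose automorphism group is non-trivial and contains a cyclic subgroup of inner automorphisms of order $s=(q^m-1)/(q-1)$.
   Context: A loop is a set with a binary operation and identity element $1$ in which, in $xy=z$, any two of $x,y,z$ determine the third uniquely. Its left, middle and right nuclei are the sets of $x$ with $(xy)z=x(yz)$, resp. $(yx)z=y(xz)$, resp. $(yz)x=y(zx)$, for all $y,z$; the center consists of nuclear elements commuting with all elements. The statement ''$\mathbb{F}_{q}^\times\cdot 1$'' etc. refers to $L$ being realized as the nonzero elements of a finite unital division algebra over $\mathbb{F}_q$ containing $\mathbb{F}_{q^m}$ as a subfield $\mathbb{F}_{q^m}\cdot 1$. An inner automorphism is a loop automorphism of the form $x\mapsto (c_lx)c$ where $c_l$ is the left inverse of $c$. *)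

(* Defs.v *)
From HB Require Import structures.
From mathcomp Require Import all_boot all_order all_algebra all_fingroup all_solvable all_field.
Set Implicit Arguments. Unset Strict Implicit. Unset Printing Implicit Defensive.
Import GRing.Theory.
Local Open Scope ring_scope.

Section Loops.
Variables (T : finType) (op : T -> T -> T) (e : T).

Definition is_loop : Prop :=
  (forall x, op e x = x /\ op x e = x) /\
  (forall x z, exists! y, op x y = z) /\
  (forall y z, exists! x, op x y = z).

Definition left_nucleus : {set T} :=
  [set x | [forall y, forall z, op (op x y) z == op x (op y z)]].
Definition middle_nucleus : {set T} :=
  [set x | [forall y, forall z, op (op y x) z == op y (op x z)]].
Definition right_nucleus : {set T} :=
  [set x | [forall y, forall z, op (op y z) x == op y (op z x)]].
Definition loop_center : {set T} :=
  [set x in left_nucleus :&: middle_nucleus :&: right_nucleus |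
     [forall y, op x y == op y x]].

Definition loop_aut : {set {perm T}} :=
  [set f : {perm T} | [forall x, forall y, f (op x y) == op (f x) (f y)]].

Definition is_inner_aut (f : {perm T}) : Prop :=
  f \in loop_aut /\
  exists c cl : T, op cl c = e /\ forall x, f x = op (op cl x) c.
End Loops.

Section Alg.
Variables (F : finFieldType) (n : nat).
Notation V := 'rV[F]_n.
Variables (mul : V -> V -> V) (one : V).

Definition is_unital_division_algebra : Prop :=
  (forall (a : F) (x y z : V), mul (a *: x + y) z = a *: mul x z + mul y z) /\
  (forall (a : F) (x y z : V), mul z (a *: x + y) = a *: mul z x + mul z y) /\
  (forall x, mul one x = x /\ mul x one = x) /\
  (forall a, a != 0 -> bijective (mul a) /\ bijective (fun x => mul x a)).

Definition is_subfield (K : {set V}) : Prop :=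
  (forall c : F, c *: one \in K) /\
  (forall x y, x \in K -> y \in K -> x + y \in K) /\
  (forall (c : F) x, x \in K -> c *: x \in K) /\
  (forall x y, x \in K -> y \in K -> mul x y \in K) /\
  (forall x y, x \in K -> y \in K -> mul x y = mul y x) /\
  (forall x y z, x \in K -> y \in K -> z \in K ->
      mul (mul x y) z = mul x (mul y z)) /\
  (forall x, x \in K -> x != 0 -> exists2 y, y \in K & mul x y = one).
End Alg.

Notation nzvec F n := {x : 'rV[F]_n | x != 0}.

(* Main.v *)
Require Import Defs.
From HB Require Import structures.
From mathcomp Require Import all_boot all_order all_algebra all_fingroup all_solvable all_field.
From mathcomp Require Import zify ring.
Set Implicit Arguments. Unset Strict Implicit. Unset Printing Implicit Defensive.
Import GRing.Theory.
Local Open Scope ring_scope.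

Section Core.
Variables (K0 : finFieldType) (L : fieldExtType K0) (n : nat).
Local Notation m := n.+2.
Variable sig : nat -> L -> L.
Hypothesis sigD : forall i x y, sig i (x + y) = sig i x + sig i y.
Hypothesis sigM : forall i x y, sig i (x * y) = sig i x * sig i y.
Hypothesis sig1 : forall i, sig i 1 = 1.
Hypothesis sig_0 : forall x, sig 0 x = x.
Hypothesis sigC : forall i j x, sig i (sig j x) = sig (i + j) x.
Hypothesis sig_m : forall x, sig m x = x.
Variable a : L.
Hypothesis sig_fix : forall i x, (0 < i < m)%N -> sig i x = x -> sig 1 x = x.
Hypothesis a_nF : sig 1 a != a.

Lemma sig0 i : sig i 0 = 0.
Proof. by apply: (addrI (sig i 0)); rewrite -sigD !addr0. Qed.
Lemma sigN i x : sig i (- x) = - sig i x.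
Proof. by apply: (addrI (sig i x)); rewrite -sigD !subrr sig0. Qed.
Lemma sigB i x y : sig i (x - y) = sig i x - sig i y.
Proof. by rewrite sigD sigN. Qed.
Lemma sig_mod i x : sig i x = sig (i %% m) x.
Proof.
rewrite {1}(divn_eq i m) addnC -sigC; congr sig.
elim: (i %/ m)%N => [|k IH]; first by rewrite mul0n sig_0.
by rewrite mulSn -sigC IH sig_m.
Qed.
Lemma sig_inj i : injective (sig i).
Proof.
move=> x y e.
have H z : sig (m * i - i) (sig i z) = z.
  rewrite sigC subnK; last by rewrite leq_pmull.
  by rewrite (sig_mod (m * i)) mulnC modnMl sig_0.
by rewrite -(H x) -(H y) e.
Qed.
Lemma sig_eq0 i x : (sig i x == 0) = (x == 0).
Proof. by rewrite -{1}(sig0 i) (inj_eq (@sig_inj i)). Qed.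
Lemma sigV i x : sig i x^-1 = (sig i x)^-1.
Proof.
have [->|x0] := eqVneq x 0; first by rewrite invr0 sig0 invr0.
apply: (@mulfI _ (sig i x)); first by rewrite sig_eq0.
by rewrite -sigM !divff ?sig_eq0 // sig1.
Qed.

Definition ev (i : 'I_m) : 'rV[L]_m := 'e_i.
Definition oadd (i j : 'I_m) : 'I_m := inZp (i + j).
Definition cc (i j : 'I_m) : L := if (i + j < m)%N then 1 else sig (i + j - m) a.
Definition amul (x y : 'rV[L]_m) : 'rV[L]_m :=
  \sum_(i < m) \sum_(j < m) (x 0 i * sig i (y 0 j) * cc i j) *: ev (oadd i j).

Lemma evE (c : L) i l : (c *: ev i) 0 l = if l == i then c else 0.
Proof. by rewrite !mxE eqxx /=; case: eqP => _; rewrite ?mulr1 ?mulr0. Qed.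

Lemma amul_mono x y i j :
  amul (x *: ev i) (y *: ev j) = (x * sig i y * cc i j) *: ev (oadd i j).
Proof.
rewrite /amul (bigD1 i) //= [X in _ + X]big1 ?addr0; last first.
  move=> k nk; apply: big1 => l _; by rewrite evE (negbTE nk) !mul0r scale0r.
rewrite (bigD1 j) //= [X in _ + X]big1 ?addr0; last first.
  move=> l nl; by rewrite (evE y) (negbTE nl) sig0 mulr0 mul0r scale0r.
by rewrite !evE !eqxx.
Qed.

Lemma amulDl x y z : amul (x + y) z = amul x z + amul y z.
Proof.
rewrite /amul -big_split; apply: eq_bigr => i _; rewrite -big_split.
by apply: eq_bigr => j _; rewrite mxE !mulrDl scalerDl.
Qed.
Lemma amulDr x y z : amul x (y + z) = amul x y + amul x z.
Proof.
rewrite /amul -big_split; apply: eq_bigr => i _; rewrite -big_split.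
by apply: eq_bigr => j _; rewrite mxE sigD !mulrDr !mulrDl scalerDl.
Qed.
Lemma amulZl c x y : amul (c *: x) y = c *: amul x y.
Proof.
rewrite /amul scaler_sumr; apply: eq_bigr => i _; rewrite scaler_sumr.
by apply: eq_bigr => j _; rewrite mxE scalerA !mulrA.
Qed.
Lemma amul0l y : amul 0 y = 0.
Proof. by have := amulZl 0 0 y; rewrite !scale0r. Qed.
Lemma amul0r x : amul x 0 = 0.
Proof. by apply: (addrI (amul x 0)); rewrite -amulDr !addr0. Qed.
Lemma amulNr x y : amul x (- y) = - amul x y.
Proof. by apply: (addrI (amul x y)); rewrite -amulDr !subrr amul0r. Qed.
Lemma amulNl x y : amul (- x) y = - amul x y.
Proof. by apply: (addrI (amul x y)); rewrite -amulDl !subrr amul0l. Qed.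
Lemma amulBr x y z : amul x (y - z) = amul x y - amul x z.
Proof. by rewrite amulDr amulNr. Qed.
Lemma amulBl x y z : amul (x - y) z = amul x z - amul y z.
Proof. by rewrite amulDl amulNl. Qed.
Lemma amul_suml I r (P : pred I) (F : I -> _) y :
  amul (\sum_(i <- r | P i) F i) y = \sum_(i <- r | P i) amul (F i) y.
Proof. exact: (big_morph (amul^~ y) (fun u v => amulDl u v y) (amul0l y)). Qed.
Lemma amul_sumr I r (P : pred I) (F : I -> _) x :
  amul x (\sum_(i <- r | P i) F i) = \sum_(i <- r | P i) amul x (F i).
Proof. exact: (big_morph (amul x) (amulDr x) (amul0r x)). Qed.



Lemma oaddE i j : val (oadd i j) = ((i + j) %% m)%N.
Proof. by []. Qed.
Lemma oaddA i j k : oadd (oadd i j) k = oadd i (oadd j k).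
Proof. by apply: val_inj; rewrite !oaddE modnDml modnDmr addnA. Qed.
Lemma oadd0 i : oadd i ord0 = i.
Proof. by apply: val_inj; rewrite oaddE addn0 modn_small. Qed.
Lemma oadd0l i : oadd ord0 i = i.
Proof. by apply: val_inj; rewrite oaddE add0n modn_small. Qed.
Lemma cc0 i : cc i ord0 = 1.
Proof. by rewrite /cc addn0 ltn_ord. Qed.
Lemma cc0l i : cc ord0 i = 1.
Proof. by rewrite /cc add0n ltn_ord. Qed.
Lemma sig_oadd i j x : sig (oadd i j) x = sig (i + j) x.
Proof. by rewrite oaddE -sig_mod. Qed.

Definition e0 : 'rV[L]_m := ev ord0.

Lemma amul_e0l y : amul e0 y = y.
Proof.
rewrite {1}(row_sum_delta y) -(scale1r e0) amul_sumr [in RHS](row_sum_delta y); apply: eq_bigr => j _.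
by rewrite amul_mono sig_0 cc0l mul1r mulr1 oadd0l.
Qed.
Lemma amul_e0Zr x c : amul x (c *: e0) = \sum_(i < m) (x 0 i * sig i c) *: ev i.
Proof.
rewrite {1}(row_sum_delta x) amul_suml; apply: eq_bigr => i _.
by rewrite amul_mono cc0 mulr1 oadd0.
Qed.
Lemma amul_e0r x : amul x e0 = x.
Proof.
rewrite -(scale1r e0) amul_e0Zr [in RHS](row_sum_delta x).
by apply: eq_bigr => i _; rewrite sig1 mulr1.
Qed.

Lemma amul_expand x y :
  amul x y = \sum_(i < m) \sum_(j < m) amul (x 0 i *: ev i) (y 0 j *: ev j).
Proof.
rewrite {1}(row_sum_delta x) amul_suml; apply: eq_bigr => i _.
by rewrite {1}(row_sum_delta y) amul_sumr.
Qed.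

Lemma amul_monoZr x i c y : amul (x *: ev i) (c *: y) = sig i c *: amul (x *: ev i) y.
Proof.
rewrite (row_sum_delta y) scaler_sumr !amul_sumr scaler_sumr; apply: eq_bigr => j _.
by rewrite scalerA !amul_mono scalerA !mulrA [sig i c * _]mulrC sigM !mulrA.
Qed.

Lemma amul_decl x y : amul x y = \sum_(k < m) x 0 k *: amul (ev k) y.
Proof.
rewrite {1}(row_sum_delta x) amul_suml; apply: eq_bigr => k _.
by rewrite amulZl.
Qed.

Lemma sumevE (c : 'I_m -> L) t : (\sum_(l < m) c l *: ev l) 0 t = c t.
Proof.
rewrite summxE (bigD1 t) //= big1 ?addr0; first by rewrite evE eqxx.
by move=> l nl; rewrite evE eq_sym (negbTE nl).
Qed.

Lemma sumev_inj (f : 'I_m -> 'I_m) (c : 'I_m -> L) t :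
  injective f -> (\sum_(l < m) c l *: ev (f l)) 0 (f t) = c t.
Proof.
move=> fi; rewrite summxE (bigD1 t) //= big1 ?addr0; first by rewrite evE eqxx.
by move=> l nl; rewrite evE (inj_eq fi) eq_sym (negbTE nl).
Qed.

Lemma oadd_injl s : injective (fun l => oadd l s).
Proof.
move=> l l' /(congr1 val); rewrite !oaddE => /eqP; rewrite eqn_modDr.
by rewrite !modn_small // => /eqP /val_inj.
Qed.
Lemma oadd_injr s : injective (oadd s).
Proof.
move=> l l' /(congr1 val); rewrite !oaddE => /eqP; rewrite eqn_modDl.
by rewrite !modn_small // => /eqP /val_inj.
Qed.

Definition asc x y z := amul (amul x y) z - amul x (amul y z).
Definition Dl (i j k : 'I_m) : L :=
  cc i j * cc (oadd i j) k - sig i (cc j k) * cc i (oadd j k).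

Lemma asc_mono x y z i j k :
  asc (x *: ev i) (y *: ev j) (z *: ev k) =
  (x * sig i y * sig (i + j) z * Dl i j k) *: ev (oadd i (oadd j k)).
Proof.
rewrite /asc !amul_mono oaddA sig_oadd -scalerBl; congr (_ *: _).
rewrite /Dl !sigM sigC; ring.
Qed.

Lemma ascDl x x' y z : asc (x + x') y z = asc x y z + asc x' y z.
Proof. by rewrite /asc !amulDl opprD addrACA. Qed.
Lemma ascDm x y y' z : asc x (y + y') z = asc x y z + asc x y' z.
Proof. by rewrite /asc amulDr amulDl amulDl amulDr opprD addrACA. Qed.
Lemma ascDr x y z z' : asc x y (z + z') = asc x y z + asc x y z'.
Proof. by rewrite /asc !amulDr opprD addrACA. Qed.
Lemma asc0l y z : asc 0 y z = 0.
Proof. by rewrite /asc !amul0l subrr. Qed.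
Lemma asc0m x z : asc x 0 z = 0.
Proof. by rewrite /asc amul0l amul0r amul0l subrr. Qed.
Lemma asc0r x y : asc x y 0 = 0.
Proof. by rewrite /asc !amul0r subrr. Qed.

Lemma asc_suml I r (P : pred I) (F : I -> _) y z :
  asc (\sum_(i <- r | P i) F i) y z = \sum_(i <- r | P i) asc (F i) y z.
Proof. exact: (big_morph (fun x => asc x y z) (fun u v => ascDl u v y z) (asc0l y z)). Qed.
Lemma asc_summ I r (P : pred I) (F : I -> _) x z :
  asc x (\sum_(i <- r | P i) F i) z = \sum_(i <- r | P i) asc x (F i) z.
Proof. exact: (big_morph (fun y => asc x y z) (fun u v => ascDm x u v z) (asc0m x z)). Qed.
Lemma asc_sumr I r (P : pred I) (F : I -> _) x y :
  asc x y (\sum_(i <- r | P i) F i) = \sum_(i <- r | P i) asc x y (F i).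
Proof. exact: (big_morph (fun z => asc x y z) (fun u v => ascDr x y u v) (asc0r x y)). Qed.

Lemma Dl0l j k : Dl ord0 j k = 0.
Proof. by rewrite /Dl cc0l oadd0l cc0l sig_0 mul1r mulr1 subrr. Qed.
Lemma Dl0m i k : Dl i ord0 k = 0.
Proof. by rewrite /Dl cc0 oadd0 cc0l oadd0l sig1 !mul1r subrr. Qed.
Lemma Dl0r i j : Dl i j ord0 = 0.
Proof. by rewrite /Dl cc0 oadd0 cc0 sig1 !mulr1 mul1r subrr. Qed.

Lemma Dl_key (u v : 'I_m) : (u + v = m)%N -> Dl u v u = a - sig u a.
Proof.
move=> uv.
have o : oadd u v = ord0 by apply: val_inj; rewrite oaddE uv modnn.
have o' : oadd v u = ord0 by apply: val_inj; rewrite oaddE addnC uv modnn.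
rewrite /Dl o o' cc0l cc0 /cc uv addnC uv ltnn subnn sig_0; ring.
Qed.

Lemma sig_a_neq (u : 'I_m) : (0 < u)%N -> a - sig u a != 0.
Proof.
move=> u0; rewrite subr_eq0; apply/eqP => e.
by move: a_nF; rewrite (sig_fix (x := a) (i := u)) ?u0 ?ltn_ord ?eqxx.
Qed.

Lemma asc_e0l c y z : asc (c *: e0) y z = 0.
Proof.
rewrite (row_sum_delta y) (row_sum_delta z) asc_summ big1 // => j _.
rewrite asc_sumr big1 // => k _.
by rewrite asc_mono Dl0l mulr0 scale0r.
Qed.
Lemma asc_e0m c x z : asc x (c *: e0) z = 0.
Proof.
rewrite (row_sum_delta x) (row_sum_delta z) asc_suml big1 // => j _.
rewrite asc_sumr big1 // => k _.
by rewrite asc_mono Dl0m mulr0 scale0r.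
Qed.
Lemma asc_e0r c x y : asc x y (c *: e0) = 0.
Proof.
rewrite (row_sum_delta x) (row_sum_delta y) asc_suml big1 // => j _.
rewrite asc_summ big1 // => k _.
by rewrite asc_mono Dl0r mulr0 scale0r.
Qed.

Lemma ev1 i : ev i = 1 *: ev i. Proof. by rewrite scale1r. Qed.

Lemma asc_l x j k :
  asc x (ev j) (ev k) = \sum_(l < m) (x 0 l * Dl l j k) *: ev (oadd l (oadd j k)).
Proof.
rewrite {1}(row_sum_delta x) asc_suml; apply: eq_bigr => l _.
by rewrite (ev1 j) (ev1 k) asc_mono !sig1 !mulr1.
Qed.
Lemma asc_m y j k :
  asc (ev j) y (ev k) = \sum_(l < m) (sig j (y 0 l) * Dl j l k) *: ev (oadd j (oadd l k)).
Proof.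
rewrite {1}(row_sum_delta y) asc_summ; apply: eq_bigr => l _.
by rewrite (ev1 j) (ev1 k) asc_mono !sig1 !mulr1 mul1r.
Qed.
Lemma asc_r z j k :
  asc (ev j) (ev k) z = \sum_(l < m) (sig (j + k) (z 0 l) * Dl j k l) *: ev (oadd j (oadd k l)).
Proof.
rewrite {1}(row_sum_delta z) asc_sumr; apply: eq_bigr => l _.
by rewrite (ev1 j) (ev1 k) asc_mono !sig1 !mul1r.
Qed.

Definition ocomp (i : 'I_m) : 'I_m := inZp (m - i).
Lemma ocompE (i : 'I_m) : (0 < i)%N -> (i + ocomp i = m)%N.
Proof.
move=> i0; have := ltn_ord i; rewrite /ocomp.
case: i i0 => i /= i0 im _; rewrite modn_small; lia.
Qed.

Lemma is_e0 (x : 'rV[L]_m) : (forall i : 'I_m, (0 < i)%N -> x 0 i = 0) -> x = x 0 ord0 *: e0.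
Proof.
move=> H; rewrite {1}(row_sum_delta x) (bigD1 ord0) //= big1 ?addr0 //.
move=> i i0; rewrite H ?scale0r //; by rewrite lt0n.
Qed.

Lemma nucl_l x : (forall y z, asc x y z = 0) -> x = x 0 ord0 *: e0.
Proof.
move=> H; apply: is_e0 => i i0.
have := H (ev (ocomp i)) (ev i); rewrite asc_l => /(congr1 (fun w : 'rV[L]_m => w 0 (oadd i (oadd (ocomp i) i)))).
rewrite sumev_inj; last first.
  by move=> l l' /oadd_injl.
rewrite Dl_key ?ocompE // mxE => /eqP; rewrite mulf_eq0 (negbTE (sig_a_neq i0)) orbF.
by move/eqP.
Qed.

Lemma nucl_r z : (forall x y, asc x y z = 0) -> z = z 0 ord0 *: e0.
Proof.
move=> H; apply: is_e0 => i i0.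
have := H (ev i) (ev (ocomp i)); rewrite asc_r => /(congr1 (fun w : 'rV[L]_m => w 0 (oadd i (oadd (ocomp i) i)))).
rewrite sumev_inj; last first.
  by move=> l l' /oadd_injr /oadd_injr.
rewrite Dl_key ?ocompE // mxE => /eqP; rewrite mulf_eq0 (negbTE (sig_a_neq i0)) orbF.
by rewrite sig_eq0 => /eqP.
Qed.

Lemma nucl_m y : (forall x z, asc x y z = 0) -> y = y 0 ord0 *: e0.
Proof.
move=> H; apply: is_e0 => i i0.
have ci : (ocomp i + i = m)%N by rewrite addnC ocompE.
have c0 : (0 < ocomp i)%N.
  by move: ci; case: (ocomp i) => [[|k]] //= _; rewrite add0n => e; move: (ltn_ord i); rewrite e ltnn.
have := H (ev (ocomp i)) (ev (ocomp i)); rewrite asc_m => /(congr1 (fun w : 'rV[L]_m => w 0 (oadd (ocomp i) (oadd i (ocomp i))))).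
rewrite sumev_inj; last first.
  by move=> l l' /oadd_injr /oadd_injl.
rewrite Dl_key // mxE => /eqP; rewrite mulf_eq0 (negbTE (sig_a_neq c0)) orbF.
by rewrite sig_eq0 => /eqP.
Qed.

Definition o1 : 'I_m := @Ordinal m 1 isT.
Definition T h := amul (ev o1) h.

Lemma TD u v : T (u + v) = T u + T v. Proof. exact: amulDr. Qed.
Lemma TZ c v : T (c *: v) = sig 1 c *: T v.
Proof. by rewrite /T (ev1 o1) amul_monoZr. Qed.
Lemma T_sum I r (P : pred I) (F : I -> _) :
  T (\sum_(i <- r | P i) F i) = \sum_(i <- r | P i) T (F i).
Proof. exact: amul_sumr. Qed.

Lemma a_neq0 : a != 0.
Proof. by apply: contra a_nF => /eqP ->; rewrite sig0. Qed.
Lemma cc_neq0 i j : cc i j != 0.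
Proof. by rewrite /cc; case: ifP => _; rewrite ?oner_eq0 // sig_eq0 a_neq0. Qed.

Lemma cc_shift (k l : 'I_m) (k' : 'I_m) : val k' = k.+1 ->
  cc k' l = sig 1 (cc k l) * cc o1 (oadd k l).
Proof.
move=> ek; rewrite /cc ek oaddE /=.
have lm := ltn_ord l; have km := ltn_ord k'; rewrite ek in km.
case: (ltnP (k + l) m) => h1.
  rewrite (modn_small h1) sig1 mul1r addSn add1n; by [].
have -> : (k + l = (k + l - m) + m)%N by lia.
rewrite modnDr modn_small; last by lia.
have -> : (1 + (k + l - m) < m)%N by lia.
rewrite mulr1 sigC; have -> : (k.+1 + l < m)%N = false by lia.
by congr (sig _ a); lia.
Qed.

Lemma ev_shift k h : (k.+1 < m)%N ->
  amul (ev (inord k.+1)) h = T (amul (ev (inord k)) h).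
Proof.
move=> km; have k1 : (k < m)%N by lia.
rewrite {1}(row_sum_delta h) {2}(row_sum_delta h) !amul_sumr T_sum.
apply: eq_bigr => l _.
rewrite (ev1 (inord k.+1)) (ev1 (inord k)) !amul_mono /T (ev1 o1) amul_mono.
have ek : nat_of_ord (inord k.+1 : 'I_m) = (nat_of_ord (inord k : 'I_m)).+1.
  by rewrite (inordK km) (inordK k1).
rewrite -oaddA; have -> : oadd o1 (inord k) = inord k.+1.
  by apply: val_inj; rewrite oaddE /= (inordK k1) (inordK km) modn_small.
congr (_ *: _); rewrite (cc_shift _ ek) !sigM sigC !mul1r !sig1 mul1r ek.
by rewrite add1n mulrA.
Qed.

Lemma ev_iter k h : (k < m)%N -> amul (ev (inord k)) h = iter k T h.
Proof.
elim: k => [|k IH] km.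
  have -> : (inord 0 : 'I_m) = ord0 by apply: val_inj => /=; rewrite inordK.
  exact: amul_e0l.
by rewrite ev_shift // IH // ltnW.
Qed.

Lemma cc_last (l : 'I_m) : sig 1 (cc ord_max l) * cc o1 (oadd ord_max l) = sig l a.
Proof.
have lm := ltn_ord l.
rewrite /cc oaddE /=.
case: (posnP l) => [l0|l0].
  rewrite l0 addn0 ltnSn sig1 mul1r modn_small // add1n ltnn subnn sig_0.
  by rewrite ?sig_0.
rewrite ltnNge (_ : (n.+2 <= n.+1 + l)%N = true); last by lia.
have -> : (n.+1 + l = (l - 1) + m)%N by lia.
rewrite modnDr modn_small; last by lia.
rewrite (_ : (1 + (l - 1) < m)%N = true); last by lia.
rewrite mulr1 sigC /=; congr (sig _ a); lia.
Qed.

Lemma Tm_comp h t : (iter m T h) 0 t = h 0 t * sig t a.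
Proof.
rewrite iterS -ev_iter // (_ : inord n.+1 = ord_max); last first.
  by apply: val_inj => /=; rewrite inordK.
rewrite {1}(row_sum_delta h) amul_sumr T_sum.
rewrite (eq_bigr (fun l => (h 0 l * sig l a) *: ev l)) ?sumevE // => l _.
rewrite (ev1 ord_max) amul_mono /T (ev1 o1) amul_mono -oaddA.
have -> : oadd o1 ord_max = ord0.
  by apply: val_inj; rewrite oaddE /= add1n modnn.
rewrite oadd0l; congr (_ *: _).
rewrite mul1r sigM sigM sigC sig1 mul1r -mulrA cc_last.
by rewrite (_ : (1 + n.+1)%N = m) // sig_m.
Qed.

Lemma sig_a_inj (t l : 'I_m) : sig t a = sig l a -> t = l.
Proof.
wlog tl : t l / (t <= l)%N.
  move=> H e; case: (leqP t l) => h; first exact: H.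
  by apply/esym; apply: H; [exact: ltnW | exact/esym].
move=> e; apply: val_inj => /=; apply/eqP; rewrite eqn_leq tl /=; apply: contraT; rewrite -ltnNge => lt.
have lm := ltn_ord l.
have := congr1 (sig (m - l)) e; rewrite !sigC subnK; last exact: ltnW.
rewrite sig_m => e'.
move: a_nF; rewrite (sig_fix (i := (m - l + t)%N)) ?eqxx //; lia.
Qed.

Section Simple.
Variable P : 'rV[L]_m -> Prop.
Hypothesis PD : forall u v, P u -> P v -> P (u + v).
Hypothesis PZ : forall c u, P u -> P (c *: u).
Hypothesis PT : forall u, P u -> P (T u).

Lemma P_iter k u : P u -> P (iter k T u).
Proof. by move=> Pu; elim: k => //= k IH; apply: PT. Qed.

Definition supp (w : 'rV[L]_m) := [set l | w 0 l != 0].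

Lemma supp0 w : supp w = set0 -> w = 0.
Proof.
move=> s0; apply/rowP => l; rewrite mxE; apply/eqP; apply: contraT => nz.
have : l \in supp w by rewrite inE.
by rewrite s0 inE.
Qed.

Lemma exists_mono N : forall w, P w -> w != 0 -> (#|supp w| <= N)%N -> exists l, P (ev l).
Proof.
elim: N => [|N IH] w Pw wn0 cw.
  by move: cw; rewrite leqn0 cards_eq0 => /eqP /supp0 w0; move: wn0; rewrite w0 eqxx.
have [l wl] : exists l, w 0 l != 0.
  apply/existsP; apply: contraT; rewrite negb_exists => /forallP H.
  by move: wn0; rewrite (supp0 (w := w)) ?eqxx //; apply/setP => t; rewrite !inE (negbTE (H t)).
case: (boolP [exists j, (j != l) && (w 0 j != 0)]) => [/existsP[j /andP[jl wj]] | H].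
  pose w' := iter m T w + (- sig l a) *: w.
  have Pw' : P w' by apply: PD; [apply: P_iter | apply: PZ].
  have w'E t : w' 0 t = (sig t a - sig l a) * w 0 t.
    by rewrite /w' !mxE Tm_comp; ring.
  apply: (IH w' Pw').
    apply/eqP => /rowP /(_ j); rewrite w'E mxE => /eqP; rewrite mulf_eq0 (negbTE wj) orbF.
    rewrite subr_eq0 => /eqP e; move: jl; rewrite (sig_a_inj e) eqxx //.
  have sub : supp w' \subset supp w :\ l.
    apply/subsetP => t; rewrite !inE w'E mulf_eq0 negb_or => /andP[h1 ->].
    by rewrite andbT; apply: contra h1 => /eqP ->; rewrite subrr.
  apply: leq_trans (subset_leq_card sub) _.
  by move: cw; rewrite (cardsD1 l) inE wl.
exists l.
have -> : ev l = (w 0 l)^-1 *: w.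
  rewrite {2}(row_sum_delta w) (bigD1 l) //= big1 ?addr0.
    by rewrite scalerA mulVf // scale1r.
  move=> t tl; have : ~~ ((t != l) && (w 0 t != 0)).
    by apply: contra H => h; apply/existsP; exists t.
  by rewrite tl /= negbK => /eqP ->; rewrite scale0r.
exact: PZ.
Qed.

Lemma T_ev t : T (ev t) = cc o1 t *: ev (oadd o1 t).
Proof. by rewrite /T (ev1 o1) (ev1 t) amul_mono sig1 !mul1r. Qed.

Lemma iter_oadd r (l : 'I_m) : val (iter r (oadd o1) l) = ((l + r) %% m)%N.
Proof.
elim: r => [|r IH]; first by rewrite addn0 modn_small.
by rewrite iterS oaddE IH /= modnDmr addnS add1n.
Qed.

Lemma P_all : (exists2 w, P w & w != 0) -> forall v, P v.
Proof.
case=> w Pw wn0.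
have [l Pl] := @exists_mono _ w Pw wn0 (leqnn _).
have Pe r : P (ev (iter r (oadd o1) l)).
  elim: r => //= r IH.
  have := PZ (cc o1 (iter r (oadd o1) l))^-1 (PT IH).
  by rewrite T_ev scalerA mulVf ?cc_neq0 // scale1r.
have Pet t : P (ev t).
  have lm := ltn_ord l; have tm := ltn_ord t.
  have -> : t = iter (t + m - l) (oadd o1) l.
    apply: val_inj; rewrite iter_oadd.
    have -> : (l + (t + m - l) = t + m)%N by lia.
    by rewrite modnDr modn_small.
  exact: Pe.
have P0 : P 0 by have := PZ 0 Pw; rewrite scale0r.
move=> v; rewrite (row_sum_delta v).
by apply: (big_ind P) => // i _; apply: PZ.
Qed.
End Simple.

Lemma indep y : y != 0 -> forall N, (N <= m)%N -> forall g : nat -> L,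
  \sum_(k < N) g k *: iter k T y = 0 -> forall k, (k < N)%N -> g k = 0.
Proof.
move=> yn0; elim=> [|N IH] Nm g; first by [].
rewrite big_ord_recr /=.
case: (eqVneq (g N) 0) => [gN|gN].
  rewrite gN scale0r addr0 => /(IH (ltnW Nm)) H k; rewrite ltnS leq_eqVlt.
  by case/orP => [/eqP -> //| /H].
move=> hsum; exfalso.
pose M := \matrix_(k < N) (iter k T y : 'rV[L]_m).
have rowM (k : 'I_N) : (iter k T y <= M)%MS.
  by rewrite -(rowK (fun k : 'I_N => iter k T y)) row_sub.
have TN : (iter N T y <= M)%MS.
  have -> : iter N T y = - (g N)^-1 *: \sum_(k < N) g k *: iter k T y.
    apply: (@scalerI _ _ (g N)) => //.
    rewrite scalerA mulrN divff // scaleN1r.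
    by apply/eqP; rewrite -addr_eq0 addrC hsum.
  rewrite scalemx_sub // summx_sub // => k _; exact: scalemx_sub.
have PT v : (v <= M)%MS -> (T v <= M)%MS.
  case/submxP => u ->; rewrite mulmx_sum_row T_sum summx_sub // => k _.
  rewrite rowK TZ scalemx_sub //.
  have -> : T (iter k T y) = iter k.+1 T y by [].
  case: (ltnP k.+1 N) => h; first exact: (rowM (Ordinal h)).
  by have -> : k.+1 = N by apply/eqP; rewrite eqn_leq h ltn_ord.
have Pall := P_all (P := fun v => (v <= M)%MS) (fun u v => @addmx_sub _ _ _ _ u v M)
  (fun c u => @scalemx_sub _ _ _ _ c u M) PT.
have : (1%:M <= M)%MS.
  apply/row_subP => i; apply: Pall.
  case: (posnP N) => [N0|Npos]; last first.
    by exists y => //; exact: (rowM (Ordinal Npos)).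
  exfalso; move: hsum gN; rewrite N0 big_ord0 add0r => /eqP; rewrite scaler_eq0.
  case/orP => [/eqP ->|/eqP y0]; first by rewrite eqxx.
  by move: yn0; rewrite -[y]/(iter 0 T y) y0 eqxx.
move/mxrankS; rewrite mxrank1 => /leq_trans /(_ (rank_leq_row M)).
by move: Nm; rewrite ltnNge => /negbTE ->.
Qed.

Lemma nzd x y : x != 0 -> y != 0 -> amul x y != 0.
Proof.
move=> xn0 yn0; apply: contra xn0 => /eqP xy.
have : amul x y = \sum_(k < m) x 0 (inord k) *: iter k T y.
  rewrite amul_decl; apply: eq_bigr => k _.
  by rewrite -ev_iter // inord_val.
rewrite xy => /esym /(@indep y yn0 m (leqnn m) (fun k => x 0 (inord k))) => H; apply/eqP/rowP => k; rewrite mxE.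
by have := H k (ltn_ord k); rewrite inord_val.
Qed.

Lemma sig_fixed c : sig 1 c = c -> forall i, sig i c = c.
Proof. by move=> h; elim=> [|i IH]; rewrite ?sig_0 // -add1n -sigC IH h. Qed.

Lemma amulZr_fixed c x y : sig 1 c = c -> amul x (c *: y) = c *: amul x y.
Proof.
move=> h; rewrite {1}(row_sum_delta x) {2}(row_sum_delta x) !amul_suml scaler_sumr.
by apply: eq_bigr => i _; rewrite amul_monoZr sig_fixed.
Qed.

Lemma amul_e0e0 c d : amul (c *: e0) (d *: e0) = (c * d) *: e0.
Proof. by rewrite amulZl amul_e0l scalerA. Qed.

Lemma center_fixed c : (forall y, amul (c *: e0) y = amul y (c *: e0)) -> sig 1 c = c.
Proof.
move=> /(_ (ev o1)); rewrite amulZl amul_e0l (ev1 o1) amul_monoZr amul_e0r.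
move=> /(congr1 (fun w : 'rV[L]_m => w 0 o1)); rewrite !mxE eqxx /= !mulr1.
by move=> <-.
Qed.

Lemma fixed_center c y : sig 1 c = c -> amul (c *: e0) y = amul y (c *: e0).
Proof. by move=> h; rewrite amulZl amul_e0l amulZr_fixed // amul_e0r. Qed.

Definition phi c x := amul (amul (c^-1 *: e0) x) (c *: e0).

Lemma phi_mono c y j : phi c (y *: ev j) = (c^-1 * y * sig j c) *: ev j.
Proof.
rewrite /phi amulZl amul_e0l scalerA /e0 (ev1 ord0) scalerA mulr1 amul_mono.
by rewrite cc0 mulr1 oadd0.
Qed.

Lemma phiD c x y : phi c (x + y) = phi c x + phi c y.
Proof. by rewrite /phi amulDr amulDl. Qed.
Lemma phi0 c : phi c 0 = 0.
Proof. by rewrite /phi amul0r amul0l. Qed.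
Lemma phi_sum c I r (P : pred I) (F : I -> _) :
  phi c (\sum_(i <- r | P i) F i) = \sum_(i <- r | P i) phi c (F i).
Proof. exact: (big_morph (phi c) (phiD c) (phi0 c)). Qed.

Lemma phiE c x : phi c x = \sum_(i < m) (c^-1 * x 0 i * sig i c) *: ev i.
Proof.
by rewrite {1}(row_sum_delta x) phi_sum; apply: eq_bigr => i _; rewrite phi_mono.
Qed.

Lemma phi_aut c x y : c != 0 -> phi c (amul x y) = amul (phi c x) (phi c y).
Proof.
move=> c0.
rewrite amul_expand phi_sum [in RHS](row_sum_delta x) [in RHS](row_sum_delta y) !phi_sum amul_suml.
apply: eq_bigr => i _; rewrite phi_sum amul_sumr; apply: eq_bigr => j _.
rewrite amul_mono !phi_mono amul_mono sig_oadd; congr (_ *: _).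
have si : sig i c != 0 by rewrite sig_eq0.
rewrite !sigM sigV sigC. field.
by rewrite si.
Qed.

Lemma phi_mul c d x : c != 0 -> d != 0 -> phi c (phi d x) = phi (c * d) x.
Proof.
move=> c0 d0; rewrite (phiE d) phi_sum phiE; apply: eq_bigr => i _.
rewrite phi_mono sigM; congr (_ *: _).
have si : sig i c != 0 by rewrite sig_eq0.
have sj : sig i d != 0 by rewrite sig_eq0.
field; by rewrite c0 d0.
Qed.

Lemma phi_fixed c x : c != 0 -> sig 1 c = c -> phi c x = x.
Proof.
move=> c0 h; rewrite phiE [RHS](row_sum_delta x); apply: eq_bigr => i _.
by rewrite sig_fixed // mulrC mulrA mulrV ?unitfE // mul1r.
Qed.

Lemma phi_o1 c : phi c (ev o1) = (c^-1 * sig 1 c) *: ev o1.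
Proof. by rewrite (ev1 o1) phi_mono scalerA mulr1 mulr1. Qed.

Lemma phi1 x : phi 1 x = x.
Proof. by apply: phi_fixed; rewrite ?oner_eq0 ?sig1. Qed.

Lemma phiK c x : c != 0 -> phi c^-1 (phi c x) = x.
Proof. by move=> c0; rewrite phi_mul ?invr_eq0 // mulVf // phi1. Qed.

Lemma phi_inj c : c != 0 -> injective (phi c).
Proof. by move=> c0 x y e; rewrite -(phiK x c0) -(phiK y c0) e. Qed.




Section Main.
Local Notation F := K0.
Local Notation q := #|F|.
Hypothesis dimL : \dim {:L} = m.
Hypothesis sig_line : forall c, (sig 1 c == c) = (c \in 1%VS).

Definition bas : m.-tuple L := tcast dimL (vbasis fullv).
Lemma bas_basis : basis_of fullv bas.
Proof. by rewrite val_tcast vbasisP. Qed.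
Lemma bas_free : free bas.
Proof. by case/andP: bas_basis. Qed.
Lemma bas_span v : v = \sum_(j < m) coord bas j v *: bas`_j.
Proof.
apply: coord_span; case/andP: bas_basis => /eqP -> _; exact: memvf.
Qed.

Definition Phi (x : 'rV[L]_m) : 'rV[F]_(m ^ 2) :=
  mxvec (\matrix_(i < m, j < m) coord bas j (x 0 i)).
Definition Psi (v : 'rV[F]_(m ^ 2)) : 'rV[L]_m :=
  \row_i \sum_(j < m) (vec_mx (v : 'rV[F]_(m * m)) : 'M_(m, m)) i j *: bas`_j.

Lemma PsiK : cancel Phi Psi.
Proof.
move=> x; apply/rowP => i; rewrite mxE /Phi mxvecK.
rewrite [RHS]bas_span; apply: eq_bigr => j _; by rewrite mxE.
Qed.
Lemma PhiK : cancel Psi Phi.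
Proof.
move=> v; rewrite /Phi -[RHS](vec_mxK (v : 'rV[F]_(m * m))); congr mxvec.
apply/matrixP => i j; rewrite [LHS]mxE [X in coord _ _ X]mxE coord_sum_free //; exact: bas_free.
Qed.
Lemma Phi_inj : injective Phi. Proof. exact: can_inj PsiK. Qed.
Lemma Psi_inj : injective Psi. Proof. exact: can_inj PhiK. Qed.

Lemma PhiD x y : Phi (x + y) = Phi x + Phi y.
Proof.
rewrite /Phi -linearD; congr mxvec; apply/matrixP => i j; rewrite !mxE.
by rewrite linearD.
Qed.
Lemma PhiZ (c : F) x : Phi (c%:A *: x) = c *: Phi x.
Proof.
rewrite /Phi -linearZ; congr mxvec; apply/matrixP => i j; rewrite !mxE.
by rewrite mulr_algl linearZ.
Qed.
Lemma Phi0 : Phi 0 = 0.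
Proof. by apply: (addrI (Phi 0)); rewrite -PhiD !addr0. Qed.
Lemma PsiD u v : Psi (u + v) = Psi u + Psi v.
Proof. by apply: Phi_inj; rewrite PhiD !PhiK. Qed.
Lemma PsiZ (c : F) u : Psi (c *: u) = c%:A *: Psi u.
Proof. by apply: Phi_inj; rewrite PhiZ !PhiK. Qed.
Lemma Psi0 : Psi 0 = 0.
Proof. by apply: Phi_inj; rewrite PhiK Phi0. Qed.
Lemma Psi_eq0 u : (Psi u == 0) = (u == 0).
Proof. by rewrite -Psi0 (inj_eq Psi_inj). Qed.
Lemma Phi_eq0 x : (Phi x == 0) = (x == 0).
Proof. by rewrite -Phi0 (inj_eq Phi_inj). Qed.


Lemma line_fixed (c : F) : sig 1 c%:A = c%:A.
Proof. apply/eqP; rewrite sig_line; apply/vlineP; by exists c. Qed.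

Definition mulV (u v : 'rV[F]_(m ^ 2)) := Phi (amul (Psi u) (Psi v)).
Definition oneV := Phi e0.
Lemma mulVE u v : Psi (mulV u v) = amul (Psi u) (Psi v).
Proof. by rewrite /mulV PsiK. Qed.
Lemma Psi_one : Psi oneV = e0. Proof. exact: PsiK. Qed.

Lemma mulV_inj_l u : u != 0 -> injective (mulV u).
Proof.
move=> u0 x y /Phi_inj e; apply: Psi_inj; apply/eqP; rewrite -subr_eq0.
have pu : Psi u != 0 by rewrite Psi_eq0.
apply/negPn/negP => h.
by move: (nzd pu h); rewrite amulBr e subrr eqxx.
Qed.
Lemma mulV_inj_r u : u != 0 -> injective (fun x => mulV x u).
Proof.
move=> u0 x y /Phi_inj e; apply: Psi_inj; apply/eqP; rewrite -subr_eq0.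
have pu : Psi u != 0 by rewrite Psi_eq0.
apply/negPn/negP => h.
by move: (nzd h pu); rewrite amulBl e subrr eqxx.
Qed.

Lemma mulV_neq0 u v : u != 0 -> v != 0 -> mulV u v != 0.
Proof.
move=> hu hv; rewrite -Psi_eq0 mulVE; apply: nzd; by rewrite Psi_eq0.
Qed.

Lemma division : is_unital_division_algebra mulV oneV.
Proof.
split; [|split; [|split]].
- move=> c x y z; by rewrite /mulV PsiD PsiZ amulDl amulZl PhiD PhiZ.
- move=> c x y z; by rewrite /mulV PsiD PsiZ amulDr amulZr_fixed ?line_fixed // PhiD PhiZ.
- move=> x; by rewrite /mulV Psi_one amul_e0l amul_e0r PhiK.
- move=> u u0; split; apply: injF_bij; [exact: mulV_inj_l | exact: mulV_inj_r].
Qed.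

Hypothesis cardL : #|FinFieldExtType L| = (q ^ m)%N.

Definition Kset : {set 'rV[F]_(m ^ 2)} := [set Phi (c *: e0) | c : FinFieldExtType L].

Lemma e0_neq0 : e0 != 0.
Proof. by apply/eqP => /rowP /(_ ord0); rewrite !mxE eqxx /= => /eqP; rewrite oner_eq0. Qed.

Lemma KsetP u : reflect (exists c : L, u = Phi (c *: e0)) (u \in Kset).
Proof.
apply: (iffP imsetP) => [[c _ ->]|[c ->]]; first by exists c.
by exists c.
Qed.

Lemma Kset_card : #|Kset| = (q ^ m)%N.
Proof.
rewrite card_imset // => c d /Phi_inj /eqP; rewrite -subr_eq0 -scalerBl scaler_eq0.
by rewrite (negbTE e0_neq0) orbF subr_eq0 => /eqP.
Qed.

Lemma subfield : is_subfield mulV oneV Kset.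
Proof.
split; [|split; [|split; [|split; [|split; [|split]]]]].
- move=> c; apply/KsetP; exists c%:A; by rewrite PhiZ.
- move=> x y /KsetP[c ->] /KsetP[d ->]; apply/KsetP; exists (c + d); by rewrite -PhiD scalerDl.
- move=> c x /KsetP[d ->]; apply/KsetP; exists (c%:A * d); by rewrite -PhiZ scalerA.
- move=> x y /KsetP[c ->] /KsetP[d ->]; apply/KsetP; exists (c * d).
  by rewrite /mulV !PsiK amul_e0e0.
- move=> x y /KsetP[c ->] /KsetP[d ->]; by rewrite /mulV !PsiK !amul_e0e0 mulrC.
- move=> x y z /KsetP[c ->] _ _; rewrite /mulV !PsiK; congr Phi.
  by have := asc_e0l c (Psi y) (Psi z); rewrite /asc => /eqP; rewrite subr_eq0 => /eqP.
- move=> x /KsetP[c ->]; rewrite Phi_eq0 scaler_eq0 (negbTE e0_neq0) orbF => c0.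
  exists (Phi (c^-1 *: e0)); first by apply/KsetP; exists c^-1.
  by rewrite /mulV !PsiK amul_e0e0 divff // scale1r.
Qed.

Local Notation NZ := (nzvec F (m ^ 2)).

Definition lop (x y : NZ) : NZ :=
  exist _ (mulV (val x) (val y)) (mulV_neq0 (valP x) (valP y)).
Lemma oneV_neq0 : oneV != 0. Proof. by rewrite Phi_eq0 e0_neq0. Qed.
Definition eV : NZ := exist _ oneV oneV_neq0.

Lemma mulV0r u : mulV u 0 = 0.
Proof. by rewrite /mulV Psi0 amul0r Phi0. Qed.
Lemma mulV0l u : mulV 0 u = 0.
Proof. by rewrite /mulV Psi0 amul0l Phi0. Qed.

Lemma loop : is_loop lop eV.
Proof.
split; [|split].
- move=> x; split; apply: val_inj; by rewrite /= /mulV Psi_one ?amul_e0l ?amul_e0r PhiK.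
- move=> x z; have [f fK Kf] := injF_bij (mulV_inj_l (valP x)).
  have wn0 : f (val z) != 0.
    apply: contraTneq (valP z) => w0; by rewrite -[val z]Kf w0 mulV0r eqxx.
  exists (exist _ (f (val z)) wn0); split; first by apply: val_inj; rewrite /= Kf.
  move=> y /(congr1 val) /= e; apply: val_inj => /=.
  by apply: (mulV_inj_l (valP x)); rewrite e Kf.
- move=> y z; have [f fK Kf] := injF_bij (mulV_inj_r (valP y)).
  have wn0 : f (val z) != 0.
    apply: contraTneq (valP z) => w0; by rewrite -[val z]Kf w0 mulV0l eqxx.
  exists (exist _ (f (val z)) wn0); split; first by apply: val_inj; rewrite /= Kf.
  move=> x /(congr1 val) /= e; apply: val_inj => /=.
  by apply: (mulV_inj_r (valP y)); rewrite e Kf.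
Qed.

Lemma card_NZ : #|[set: NZ]| = (q ^ (m ^ 2) - 1)%N.
Proof.
rewrite cardsT card_sig.
have -> : #|[pred x : 'rV[F]_(m ^ 2) | x != 0]| = #|predC1 (0 : 'rV[F]_(m ^ 2))|.
  by apply: eq_card.
by rewrite cardC1 card_mx mul1n subn1.
Qed.

Lemma lop_asc (x y z : NZ) :
  (lop (lop x y) z == lop x (lop y z)) = (asc (Psi (val x)) (Psi (val y)) (Psi (val z)) == 0).
Proof.
rewrite -val_eqE /= /mulV !PsiK (inj_eq Phi_inj) /asc subr_eq0.
by [].
Qed.

Definition toNZ (v : 'rV[L]_m) : NZ := insubd eV (Phi v).
Lemma toNZK v : v != 0 -> Psi (val (toNZ v)) = v.
Proof. by move=> v0; rewrite /toNZ insubdK ?PsiK // -topredE /= Phi_eq0. Qed.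

Lemma NZ_all (f : 'rV[L]_m -> 'rV[L]_m -> 'rV[L]_m) :
  (forall z, f 0 z = 0) -> (forall y, f y 0 = 0) ->
  (forall y z : NZ, f (Psi (val y)) (Psi (val z)) = 0) -> forall y z, f y z = 0.
Proof.
move=> h1 h2 H y z.
have [->|y0] := eqVneq y 0; first exact: h1.
have [->|z0] := eqVneq z 0; first exact: h2.
by have := H (toNZ y) (toNZ z); rewrite !toNZK.
Qed.

Lemma NZ_all1 (f : 'rV[L]_m -> 'rV[L]_m) :
  f 0 = 0 -> (forall y : NZ, f (Psi (val y)) = 0) -> forall y, f y = 0.
Proof.
move=> h1 H y; have [->|y0] := eqVneq y 0; first exact: h1.
by have := H (toNZ y); rewrite !toNZK.
Qed.

Lemma Psi_K u : (exists c, Psi u = c *: e0) <-> u \in Kset.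
Proof.
split=> [[c e]|/KsetP[c ->]]; last by exists c; rewrite PsiK.
by apply/KsetP; exists c; rewrite -e PhiK.
Qed.

Lemma Nl : left_nucleus lop = [set x | val x \in Kset].
Proof.
apply/setP => x; rewrite !inE; apply/idP/idP.
  move=> /forallP H; apply/Psi_K; exists (Psi (val x) 0 ord0).
  apply: nucl_l; apply: NZ_all; [exact: asc0m | exact: asc0r |].
  by move=> y z; move/forallP: (H y) => /(_ z); rewrite lop_asc => /eqP.
move/Psi_K => [c e]; apply/forallP => y; apply/forallP => z.
by rewrite lop_asc e asc_e0l.
Qed.

Lemma Nm : middle_nucleus lop = [set x | val x \in Kset].
Proof.
apply/setP => x; rewrite !inE; apply/idP/idP.
  move=> /forallP H; apply/Psi_K; exists (Psi (val x) 0 ord0).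
  apply: nucl_m; apply: (NZ_all (f := fun y z => asc y (Psi (val x)) z)).
  - by move=> z; exact: asc0l.
  - by move=> y; exact: asc0r.
  by move=> y z; move/forallP: (H y) => /(_ z); rewrite lop_asc => /eqP.
move/Psi_K => [c e]; apply/forallP => y; apply/forallP => z.
by rewrite lop_asc e asc_e0m.
Qed.

Lemma Nr : right_nucleus lop = [set x | val x \in Kset].
Proof.
apply/setP => x; rewrite !inE; apply/idP/idP.
  move=> /forallP H; apply/Psi_K; exists (Psi (val x) 0 ord0).
  apply: nucl_r; apply: (NZ_all (f := fun y z => asc y z (Psi (val x)))).
  - by move=> z; exact: asc0l.
  - by move=> y; exact: asc0m.
  by move=> y z; move/forallP: (H y) => /(_ z); rewrite lop_asc => /eqP.
move/Psi_K => [c e]; apply/forallP => y; apply/forallP => z.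
by rewrite lop_asc e asc_e0r.
Qed.

Lemma Center : loop_center lop =
  [set x | [exists c : F, (c != 0) && (val x == c *: oneV)]].
Proof.
rewrite /loop_center Nl Nm Nr !setIid.
apply/setP => x; rewrite !inE; apply/idP/idP.
  case/andP => /Psi_K [c e] /forallP H.
  have fix1 : sig 1 c = c.
    apply: center_fixed => y; rewrite -e; apply/eqP; rewrite -subr_eq0; apply/eqP.
    apply: (NZ_all1 (f := fun y => amul (Psi (val x)) y - amul y (Psi (val x)))).
      by rewrite amul0r amul0l subrr.
    move=> z; apply/eqP; rewrite subr_eq0; have := H z.
    by rewrite -val_eqE /= /mulV (inj_eq Phi_inj).
  have : c \in 1%VS by rewrite -sig_line fix1.
  case/vlineP => d cd; apply/existsP; exists d.
  have ex : val x = d *: oneV.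
    by rewrite -[val x]PhiK e cd -PhiZ.
  rewrite ex eqxx andbT; apply: contraTneq (valP x) => d0.
  by rewrite ex d0 scale0r eqxx.
case/existsP => d /andP[d0 /eqP ex].
have e : Psi (val x) = d%:A *: e0 by rewrite ex PsiZ Psi_one.
rewrite (_ : val x \in Kset) /=; last by apply/Psi_K; exists d%:A.
apply/forallP => y; rewrite -val_eqE /= /mulV e (inj_eq Phi_inj).
by rewrite fixed_center ?line_fixed.
Qed.

Definition phiV c (v : 'rV[F]_(m ^ 2)) := Phi (phi c (Psi v)).
Definition fnz c (x : NZ) : NZ := if c == 0 then x else insubd x (phiV c (val x)).

Lemma phiV_neq0 c v : c != 0 -> v != 0 -> phiV c v != 0.
Proof.
move=> c0 v0; rewrite /phiV Phi_eq0; apply/eqP => h.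
by move: v0; rewrite -Psi_eq0 -(phiK (Psi v) c0) h phi0 eqxx.
Qed.

Lemma fnzE c x : c != 0 -> val (fnz c x) = phiV c (val x).
Proof.
move=> c0; rewrite /fnz (negbTE c0) insubdK //.
by rewrite -topredE /= phiV_neq0 // (valP x).
Qed.

Lemma fnz_inj c : injective (fnz c).
Proof.
case: (eqVneq c 0) => [c0|c0]; first by move=> x y; rewrite /fnz c0 eqxx.
move=> x y /(congr1 val); rewrite !fnzE // => /Phi_inj /(phi_inj c0) /Psi_inj.
exact: val_inj.
Qed.

Definition pf c : {perm NZ} := perm (@fnz_inj c).

Lemma pfE c x : c != 0 -> val (pf c x) = phiV c (val x).
Proof. by move=> c0; rewrite permE fnzE. Qed.

Lemma pf_aut c : c != 0 -> pf c \in loop_aut lop.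
Proof.
move=> c0; rewrite inE; apply/forallP => x; apply/forallP => y.
rewrite -val_eqE /= !pfE //= /phiV /mulV !PsiK phi_aut //.
Qed.

Lemma pf_inner c : c != 0 -> is_inner_aut lop eV (pf c).
Proof.
move=> c0; split; first exact: pf_aut.
exists (toNZ (c *: e0)), (toNZ (c^-1 *: e0)).
have ce : c *: e0 != 0 by rewrite scaler_eq0 negb_or c0 e0_neq0.
have ce' : c^-1 *: e0 != 0 by rewrite scaler_eq0 negb_or invr_eq0 c0 e0_neq0.
split.
  apply: val_inj; rewrite /= /mulV !toNZK // amul_e0e0 mulVf // scale1r.
  by [].
move=> x; apply: val_inj; rewrite pfE //= /mulV !PsiK !toNZK //.
Qed.

Lemma pf_mul c d x : c != 0 -> d != 0 -> pf c (pf d x) = pf (c * d) x.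
Proof.
move=> c0 d0; apply: val_inj; rewrite !pfE ?mulf_neq0 // /phiV PsiK phi_mul //.
Qed.

Lemma pfX c t : c != 0 -> (pf c ^+ t)%g = pf (c ^+ t).
Proof.
move=> c0; elim: t => [|t IH].
  apply/permP => x; rewrite perm1; apply: val_inj; rewrite pfE ?oner_eq0 //.
  by rewrite /phiV phi1 PhiK.
apply/permP => x; rewrite expgSr permM IH pf_mul ?expf_neq0 //.
by rewrite exprS.
Qed.

Lemma ev_neq0 (i : 'I_m) : ev i != 0.
Proof. by apply/eqP => /rowP /(_ i); rewrite !mxE !eqxx /= => /eqP; rewrite oner_eq0. Qed.

Lemma pf_one c : c != 0 -> (pf c == 1%g) = (sig 1 c == c).
Proof.
move=> c0; apply/eqP/eqP => [h|h].
  have := congr1 (fun f : {perm NZ} => val (f (toNZ (ev o1)))) h.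
  rewrite /= perm1 pfE // /phiV toNZK ?ev_neq0 // phi_o1 => /(congr1 Psi).
  rewrite PsiK toNZK ?ev_neq0 // => /(congr1 (fun w : 'rV[L]_m => w 0 o1)).
  rewrite !mxE !eqxx /= mulr1 => /(congr1 (fun t => c * t)).
  by rewrite mulrA divff // mul1r mulr1.
apply/permP => x; rewrite perm1; apply: val_inj; rewrite pfE //.
by rewrite /phiV phi_fixed // PhiK.
Qed.

Variable g : L.
Hypothesis g0 : g != 0.
Local Notation s := ((q ^ m - 1) %/ (q - 1))%N.
Hypothesis g_ord : forall t, (sig 1 (g ^+ t) == g ^+ t) = (s %| t)%N.
Hypothesis s_gt1 : (1 < s)%N.

Lemma order_pf : #[pf g]%g = s.
Proof.
have H t : (#[pf g]%g %| t)%N = (s %| t)%N.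
  by rewrite order_dvdn pfX // pf_one ?expf_neq0 // g_ord.
by apply/eqP; rewrite eqn_dvd H dvdnn -H dvdnn.
Qed.

Lemma main_body :
  exists (mul : 'rV[F]_(m ^ 2) -> 'rV[F]_(m ^ 2) -> 'rV[F]_(m ^ 2))
         (one : 'rV[F]_(m ^ 2)),
    is_unital_division_algebra mul one /\
    exists (K : {set 'rV[F]_(m ^ 2)}),
      is_subfield mul one K /\ #|K| = (q ^ m)%N /\
    exists (lop : nzvec F (m ^ 2) ->
                  nzvec F (m ^ 2) -> nzvec F (m ^ 2))
           (e : nzvec F (m ^ 2)),
      (forall x y, val (lop x y) = mul (val x) (val y)) /\ val e = one /\
      is_loop lop e /\
      #|[set: nzvec F (m ^ 2)]| = (q ^ (m ^ 2) - 1)%N /\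
      loop_center lop = [set x | [exists c : F, (c != 0) && (val x == c *: one)]] /\
      left_nucleus lop = [set x | val x \in K] /\
      middle_nucleus lop = [set x | val x \in K] /\
      right_nucleus lop = [set x | val x \in K] /\
      (1 < #|loop_aut lop|)%N /\
      exists H : {group {perm nzvec F (m ^ 2)}},
        H \subset loop_aut lop /\ cyclic H /\
        #|H| = ((q ^ m - 1) %/ (q - 1))%N /\
        (forall f, f \in H -> is_inner_aut lop e f).
Proof.
exists mulV, oneV; split; first exact: division.
exists Kset; split; first exact: subfield.
split; first exact: Kset_card.
exists lop, eV; split; first by [].
split; first by [].
split; first exact: loop.
split; first exact: card_NZ.
split; first exact: Center.
split; first exact: Nl.
split; first exact: Nm.
split; first exact: Nr.
have Hsub : <[pf g]>%g \subset loop_aut lop.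
  apply/subsetP => f /cycleP[t ->]; rewrite pfX //; apply: pf_aut; exact: expf_neq0.
split.
  apply: leq_trans s_gt1 _; rewrite -order_pf orderE; exact: subset_leq_card.
exists <[pf g]>%G; split; first exact: Hsub.
split; first exact: cycle_cyclic.
split; first by rewrite /= -orderE order_pf.
move=> f /cycleP[t ->]; rewrite pfX //; apply: pf_inner; exact: expf_neq0.
Qed.

End Main.
End Core.


Lemma ext_exists (F : finFieldType) p k m :
  p \in [pchar F] -> #|F| = (p ^ k)%N -> (0 < k)%N -> (0 < m)%N ->
  {L : splittingFieldType F | #|FinFieldExtType L| = (#|F| ^ m)%N}.
Proof.
move=> pcharF cardF k_gt0 m_gt0.
have pr_p : prime p by case/andP: pcharF.
pose Q := (#|F| ^ m)%N.
have Q_gt1 : (Q > 1)%N.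
  by rewrite /Q cardF -expnM (ltn_exp2l 0) ?prime_gt1 ?muln_gt0 ?k_gt0.
have Q_gt0 := ltnW Q_gt1; have Q1_gt0 : (Q.-1 > 0)%N by rewrite -ltnS prednK.
pose q := 'X^Q - 'X; have Dq R : q R = ('X^(Q.-1) - 1) * ('X - 0).
  by rewrite subr0 mulrBl mul1r -exprSr prednK.
have /FinSplittingFieldFor[/= L splitLq]: q F != 0.
  by rewrite Dq monic_neq0 ?rpredM ?monicXsubC ?monicXnsubC.
move: splitLq; rewrite /= rmorphB rmorphXn /= map_polyX -/(q L) => splitLq.
have pcharL: p \in [pchar L] by rewrite pchar_lalg.
pose Fm := FinFieldExtType L; exists L => //.
have /finField_galois_generator[/= a _ Da]: (1 <= {:L})%VS by apply: sub1v.
pose Em := fixedSpace (a ^+ m)%g; rewrite dimv1 expn1 in Da.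
have{splitLq} [zs DqL defL] := splitLq.
have Uzs: uniq zs.
  rewrite -separable_prod_XsubC -(eqp_separable DqL) Dq separable_root andbC.
  rewrite /root !hornerE subr_eq0 eq_sym expr0n gtn_eqF ?oner_eq0 //=.
  rewrite cyclotomic.separable_Xn_sub_1 // -subn1 natrB // subr_eq0.
  by rewrite natrX cardF natrX pcharf0 // expr0n gtn_eqF // expr0n gtn_eqF // eq_sym oner_eq0.
suffices /eq_card->: Fm =i zs.
  apply: succn_inj; rewrite (card_uniqP _) //= -(size_prod_XsubC _ id).
  by rewrite -(eqp_size DqL) size_polyDl size_polyXn // size_polyN size_polyX.
have in_zs: zs =i Em.
  move=> z; rewrite -root_prod_XsubC -(eqp_root DqL) (sameP fixedSpaceP eqP).
  rewrite /root !hornerE subr_eq0 /= /Q; congr (_ == z).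
  elim: (m) => [|i IHi]; first by rewrite gal_id.
  by rewrite expgSr expnSr exprM IHi galM ?Da ?memvf.
suffices defEm: Em = {:L}%VS by move=> z; rewrite in_zs defEm memvf.
apply/eqP; rewrite eqEsubv subvf -defL -[Em]subfield_closed agenvS //.
by rewrite subv_add sub1v; apply/span_subvP=> z; rewrite in_zs.
Qed.

Section FieldFacts.
Variables (F : finFieldType) (p k n : nat).
Hypotheses (pcharF : p \in [pchar F]) (cardF : #|F| = (p ^ k)%N) (k_gt0 : (0 < k)%N).
Variable L : splittingFieldType F.
Local Notation m := n.+2.
Hypothesis cardL : #|FinFieldExtType L| = (#|F| ^ m)%N.
Hypothesis pm : prime m.
Local Notation q := #|F|.

Definition fsig i (x : L) := x ^+ (q ^ i).

Lemma pcharL : p \in [pchar L].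
Proof. by rewrite pchar_lalg. Qed.

Lemma fsigD i x y : fsig i (x + y) = fsig i x + fsig i y.
Proof.
rewrite /fsig exprDn_pchar // cardF -expnM pnatX.
have pr_p : prime p by case/andP: pcharF.
by rewrite (pnatE _ pr_p) pcharL.
Qed.
Lemma fsigM i x y : fsig i (x * y) = fsig i x * fsig i y.
Proof. by rewrite /fsig exprMn. Qed.
Lemma fsig1 i : fsig i 1 = 1.
Proof. by rewrite /fsig expr1n. Qed.
Lemma fsig_0 x : fsig 0 x = x.
Proof. by rewrite /fsig expn0 expr1. Qed.
Lemma fsigC i j x : fsig i (fsig j x) = fsig (i + j) x.
Proof. by rewrite /fsig -exprM -expnD addnC. Qed.
Lemma fsig_m x : fsig m x = x.
Proof. by rewrite /fsig -cardL (@expf_card (FinFieldExtType L)). Qed.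

Lemma fsig_mul_fix i x : fsig i x = x -> forall t, fsig (t * i) x = x.
Proof.
move=> h; elim=> [|t IH]; first by rewrite mul0n fsig_0.
by rewrite mulSn -fsigC IH h.
Qed.

Lemma fsig_fix i x : (0 < i < m)%N -> fsig i x = x -> fsig 1 x = x.
Proof.
case/andP => i0 im h.
have cop : gcdn m i = 1%N.
  apply/eqP; rewrite -/(coprime m i) prime_coprime //.
  by apply/negP => /(dvdn_leq i0); rewrite leqNgt im.
have [b _ hb] := Bezoutl i (isT : (0 < m)%N).
rewrite cop in hb; case/dvdnP: hb => t ht.
have e1 : fsig (1 + b * i) x = fsig 1 x by rewrite -fsigC fsig_mul_fix.
by rewrite -e1 ht fsig_mul_fix // fsig_m.
Qed.

Lemma frob_line x : (fsig 1 x == x) = (x \in 1%VS).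
Proof.
have := Fermat's_little_theorem (1%AS : {subfield L}) x.
by rewrite /= dimv1 expn1 /fsig expn1 => ->.
Qed.

Lemma dimL : \dim {:L} = m.
Proof.
have := card_vspace (fullv : {vspace (finvect_type L)}).
rewrite card_vspacef.
move=> h; apply: (@expnI q); first by rewrite cardF (ltn_exp2l 0) // prime_gt1 //; case/andP: pcharF.
by rewrite -h -cardL.
Qed.
End FieldFacts.


Section Final.
Variables (F : finFieldType) (p k n : nat).
Hypotheses (pcharF : p \in [pchar F]) (cardF : #|F| = (p ^ k)%N) (k_gt0 : (0 < k)%N).
Variable L : splittingFieldType F.
Local Notation m := n.+2.
Hypothesis cardL : #|FinFieldExtType L| = (#|F| ^ m)%N.
Hypothesis pm : prime m.
Local Notation q := #|F|.
Local Notation s := ((q ^ m - 1) %/ (q - 1))%N.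

Lemma q_gt1 : (1 < q)%N.
Proof. by rewrite cardF (ltn_exp2l 0) // prime_gt1 //; case/andP: pcharF. Qed.

Lemma s_eq : (s * (q - 1) = q ^ m - 1)%N /\ (1 < s)%N.
Proof.
have q1 := q_gt1.
have e : (q ^ m - 1 = (q - 1) * \sum_(i < m) q ^ i)%N by rewrite !subn1 predn_exp.
rewrite e mulKn; last by lia.
split; first by rewrite mulnC.
rewrite !big_ord_recl /= expn0.
have : (1 < q ^ 1)%N by rewrite expn1.
move=> h1; apply: leq_trans (_ : 1 < 1 + #|F| ^ bump 0 0)%N _; first by rewrite /bump /= addnC addn1 ltnS ltnW // expn1 -expn1.
by rewrite leq_add2l leq_addr.
Qed.

Lemma exists_a : exists a : L, fsig 1 a != a.
Proof.
case: (pickP (fun x : FinFieldExtType L => fsig 1 x != x)) => [a ha|H]; first by exists a.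
exfalso.
have : ({:L} <= 1%VS)%VS.
  apply/subvP => x _; rewrite -(frob_line x); have := H x; by move/negbFE.
move/dimvS; rewrite dimv1 (dimL pcharF cardF k_gt0 cardL) //.
Qed.

Lemma exists_gen : exists2 g : L, g != 0 &
  forall t, (fsig 1 (g ^+ t) == g ^+ t) = (s %| t)%N.
Proof.
pose LL := FinFieldExtType L.
have /cyclicP [u Hu] := field_unit_group_cyclic [set: {unit LL}]%G.
have ou : #[u]%g = (q ^ m - 1)%N.
  by rewrite orderE -Hu card_finField_unit cardL subn1.
exists (val u : L).
  by have := valP u; rewrite unitfE.
move=> t; have g0 : (val u : L) != 0 by have := valP u; rewrite unitfE.
have gt0 : ((val u : L) ^+ t) != 0 by rewrite expf_neq0.
rewrite /fsig expn1.
have -> : ((val u : L) ^+ t) ^+ q = ((val u : L) ^+ t) ^+ (q - 1) * (val u : L) ^+ t.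
  by rewrite -exprSr subn1 prednK // ltnW // q_gt1.
rewrite -{3}[(val u : L) ^+ t]mul1r -subr_eq0 -mulrBl mulf_eq0 (negbTE gt0) orbF subr_eq0.
rewrite -exprM.
have -> : ((val u : L) ^+ (t * (q - 1)) == 1) = ((u ^+ (t * (q - 1)))%g == 1%g).
  by rewrite -val_eqE FinRing.val_unitX FinRing.val_unit1.
rewrite -order_dvdn ou.
have [se _] := s_eq; rewrite -{1}se dvdn_pmul2r //.
by have := q_gt1; lia.
Qed.
End Final.

Unset Implicit Arguments.

Theorem mainTheorem5 (q m : nat)
  (hq : exists p k : nat, prime p /\ (0 < k)%N /\ q = (p ^ k)%N)
  (hm : prime m) :
  exists (F : finFieldType), #|F| = q /\
  exists (mul : 'rV[F]_(m ^ 2) -> 'rV[F]_(m ^ 2) -> 'rV[F]_(m ^ 2))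
         (one : 'rV[F]_(m ^ 2)),
    is_unital_division_algebra mul one /\
    exists (K : {set 'rV[F]_(m ^ 2)}),
      is_subfield mul one K /\ #|K| = (q ^ m)%N /\
    exists (lop : nzvec F (m ^ 2) ->
                  nzvec F (m ^ 2) -> nzvec F (m ^ 2))
           (e : nzvec F (m ^ 2)),
      (forall x y, val (lop x y) = mul (val x) (val y)) /\ val e = one /\
      is_loop lop e /\
      #|[set: nzvec F (m ^ 2)]| = (q ^ (m ^ 2) - 1)%N /\
      loop_center lop = [set x | [exists c : F, (c != 0) && (val x == c *: one)]] /\
      left_nucleus lop = [set x | val x \in K] /\
      middle_nucleus lop = [set x | val x \in K] /\
      right_nucleus lop = [set x | val x \in K] /\
      (1 < #|loop_aut lop|)%N /\
      exists H : {group {perm nzvec F (m ^ 2)}},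
        H \subset loop_aut lop /\ cyclic H /\
        #|H| = ((q ^ m - 1) %/ (q - 1))%N /\
        (forall f, f \in H -> is_inner_aut lop e f).
Proof.
case: hq => p [k [pr_p [k_gt0 ->]]].
have [F pcharF cardF] := pPrimePowerField pr_p k_gt0.
case: m hm => [|[|n]] // hm.
have [L cardL] := ext_exists pcharF cardF k_gt0 (isT : (0 < n.+2)%N).
exists F; split; first exact: cardF.
rewrite -cardF.
have [a ha] := exists_a pcharF cardF k_gt0 cardL.
have [g g0 hg] := exists_gen pcharF cardF k_gt0 cardL hm.
have [_ s1] := s_eq pcharF cardF k_gt0 cardL hm.
apply: (@main_body F L n (@fsig F L) _ _ _ _ _ _ a _ _ _ _ _ g).
- exact: (fsigD pcharF cardF).
- exact: fsigM.
- exact: fsig1.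
- exact: fsig_0.
- exact: fsigC.
- exact: (fsig_m cardL).
- exact: (fsig_fix cardL hm).
- exact: ha.
- exact: (dimL pcharF cardF k_gt0 cardL).
- exact: frob_line.
- exact: cardL.
- exact: g0.
- exact: hg.
- exact: s1.
Qed.
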